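(* The group $\mathscr G^{\mathrm{1cas}}_{\rho}$ contains elements with stationary, hence uncountable, row-support, and therefore elements with uncountable total support. Consequently, via any coordinate relabeling of the forcing, the cascade system $(\mathbb P_1,\mathscr G^{\mathrm{1cas}}_\rho,\mathscr F^{\mathrm{1cas}}_\rho)$ is not conjugate to any symmetric system on $\mathbb P_1$ whose automorphism group consists entirely of elements with countable total support.
   Context: Over a ground model $V$ of ZFC, $\mathbb P_0$ is the forcing of finite partial regressive functions on $\omega_1$; for $V$-generic $G_0$, $\rho:\omega_1\setminus\{0\}\to\omega_1$ is the induced total regressive map, $\operatorname{Succ}_\rho(\xi)=\{\eta:\rho(\eta)=\xi\}$, $\operatorname{cl}_\rho(A)$ the least $\rho$-closed superset of $A$. In $V[G_0]$, $\mathbb P_1=\operatorname{Fn}(\omega_1\times\omega\times\omega,2,{<}\omega)$. For $\xi<\omega_1$, $i<\omega$, $s\subseteq\omega$ finite or cofinite, $\tau^{\mathrm{1cas}}_{\xi,i,s}$ is the automorphism of $\mathbb P_1$ flipping the value of a condition at each coordinate $(\zeta,i,n)$ with $n\in s$ and $\zeta\in\{\xi\}\cup\operatorname{Succ}_\rho(\xi)$. $\mathscr G^{\mathrm{1cas}}_\rho$ is the group generated by them; $\operatorname{Fix}^{\mathrm{1cas}}_\rho(A)$ is the subgroup acting trivially on coordinates $(\zeta,j,n)$ with $\zeta\in\operatorname{cl}_\rho(A)$; $\mathscr F^{\mathrm{1cas}}_\rho$ is the filter generated by these for countable $A$. The total support of an automorphism is the set of coordinates $(\eta,j,n)$ on which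 it acts nontrivially; its row-support is the set of $\eta<\omega_1$ such that it acts nontrivially on some coordinate $(\eta,j,n)$. A coordinate relabeling is a bijection of $\omega_1\times\omega\times\omega$, inducing an automorphism of $\mathbb P_1$ by which groups of automorphisms are conjugated. *)

(* Defs.v *)
From Stdlib Require Import List ClassicalEpsilon.
Import ListNotations.
Set Implicit Arguments.

Definition countable {T : Type} (S : T -> Prop) : Prop :=
  exists f : T -> nat, forall x y, S x -> S y -> f x = f y -> x = y.

(* omega_1 as a well-order that is uncountable and all of whose proper initial
   segments are countable (this determines the order type omega_1). *)
Record omega1 := {
  o_carrier :> Type;
  o_lt : o_carrier -> o_carrier -> Prop;
  o_zero : o_carrier;
  o_lt_irrefl : forall x, ~ o_lt x x;
  o_lt_trans : forall x y z, o_lt x y -> o_lt y z -> o_lt x z;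
  o_lt_total : forall x y, o_lt x y \/ x = y \/ o_lt y x;
  o_lt_wf : well_founded o_lt;
  o_zero_least : forall x, x <> o_zero -> o_lt o_zero x;
  o_uncountable : ~ countable (fun _ : o_carrier => True);
  o_seg_countable : forall y, countable (fun x => o_lt x y)
}.
Arguments o_lt {o}.
Arguments o_zero {o}.

Section Defs.
Variable O : omega1.

Definition unbounded (C : O -> Prop) : Prop :=
  forall a : O, exists c, C c /\ o_lt a c.
Definition closed (C : O -> Prop) : Prop :=
  forall a : O, (exists b, o_lt b a) ->
    (forall b, o_lt b a -> exists c, C c /\ o_lt b c /\ o_lt c a) -> C a.
Definition club (C : O -> Prop) : Prop := closed C /\ unbounded C.
Definition stationary (S : O -> Prop) : Prop :=
  forall C, club C -> exists x, S x /\ C x.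

(* total regressive map on omega_1 \ {0} (its value at 0 is irrelevant) *)
Definition regressive (rho : O -> O) : Prop :=
  forall x, x <> o_zero -> o_lt (rho x) x.

Definition Succ (rho : O -> O) (xi : O) : O -> Prop :=
  fun eta => eta <> o_zero /\ rho eta = xi.

Definition coord : Type := (O * nat * nat)%type.

Definition finite_dom (p : coord -> option bool) : Prop :=
  exists l : list coord, forall c, p c <> None -> In c l.

Definition P1 : Type := { p : coord -> option bool | finite_dom p }.

Definition finite_nat (s : nat -> Prop) : Prop :=
  exists l : list nat, forall n, s n -> In n l.
Definition finite_or_cofinite (s : nat -> Prop) : Prop :=
  finite_nat s \/ finite_nat (fun n => ~ s n).

Definition flip_raw (S : coord -> Prop) (p : coord -> option bool) : coord -> option bool :=
  fun c => if excluded_middle_informative (S c) then option_map negb (p c) else p c.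

Lemma flip_fin (S : coord -> Prop) p : finite_dom p -> finite_dom (flip_raw S p).
Proof.
  intros [l Hl]; exists l; intros c Hc; apply Hl; intro E; apply Hc.
  unfold flip_raw; destruct (excluded_middle_informative (S c)); rewrite E; reflexivity.
Qed.

Definition flip (S : coord -> Prop) (p : P1) : P1 :=
  exist _ (flip_raw S (proj1_sig p)) (flip_fin S (proj2_sig p)).

Definition cas_set (rho : O -> O) (xi : O) (i : nat) (s : nat -> Prop) : coord -> Prop :=
  fun c => match c with (zeta, j, n) =>
    (zeta = xi \/ Succ rho xi zeta) /\ j = i /\ s n end.

Definition tau1cas (rho : O -> O) (xi : O) (i : nat) (s : nat -> Prop) : P1 -> P1 :=
  flip (cas_set rho xi i s).

Inductive G1cas (rho : O -> O) : (P1 -> P1) -> Prop :=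
| G1_id : G1cas rho (fun p => p)
| G1_tau : forall xi i s, finite_or_cofinite s -> G1cas rho (tau1cas rho xi i s)
| G1_comp : forall g h, G1cas rho g -> G1cas rho h -> G1cas rho (fun p => g (h p))
| G1_inv : forall g h, G1cas rho g -> (forall p, h (g p) = p) -> (forall p, g (h p) = p) ->
    G1cas rho h
| G1_ext : forall g h, G1cas rho g -> (forall p, g p = h p) -> G1cas rho h.

Definition acts_nontriv (a : P1 -> P1) (c : coord) : Prop :=
  exists p : P1, proj1_sig (a p) c <> proj1_sig p c.

Definition total_support (a : P1 -> P1) : coord -> Prop := acts_nontriv a.
Definition row_support (a : P1 -> P1) : O -> Prop :=
  fun eta => exists j n, acts_nontriv a (eta, j, n).

Record relabeling := {
  rl_f : coord -> coord;
  rl_g : coord -> coord;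
  rl_fg : forall c, rl_f (rl_g c) = c;
  rl_gf : forall c, rl_g (rl_f c) = c
}.

Lemma relabel_fin (f g : coord -> coord) (Hfg : forall c, f (g c) = c) p :
  finite_dom p -> finite_dom (fun c => p (g c)).
Proof.
  intros [l Hl]; exists (map f l); intros c Hc.
  rewrite <- (Hfg c); apply in_map; apply Hl; exact Hc.
Qed.

(* induced automorphism: the value of p at c is moved to f c *)
Definition relabel_act (pi : relabeling) (p : P1) : P1 :=
  exist _ (fun c => proj1_sig p (rl_g pi c)) (relabel_fin _ _ (rl_fg pi) (proj2_sig p)).
Definition relabel_act_inv (pi : relabeling) (p : P1) : P1 :=
  exist _ (fun c => proj1_sig p (rl_f pi c)) (relabel_fin _ _ (rl_gf pi) (proj2_sig p)).

Definition conjG (pi : relabeling) (G : (P1 -> P1) -> Prop) : (P1 -> P1) -> Prop :=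
  fun h => exists g, G g /\ forall p, h p = relabel_act pi (g (relabel_act_inv pi p)).

End Defs.

Arguments regressive {O}.
Arguments stationary {O}.
Arguments G1cas {O}.
Arguments row_support {O}.
Arguments total_support {O}.
Arguments conjG {O}.

(* Main.v *)
Require Import Defs.
From Stdlib Require Import List ClassicalEpsilon Classical Arith Lia Cantor
  FunctionalExtensionality ProofIrrelevance.
Set Implicit Arguments.

Section Aux.
Variable O : omega1.

Lemma pair_inj (a b c d : nat) : Cantor.to_nat (a, b) = Cantor.to_nat (c, d) -> a = c /\ b = d.
Proof.
  intro H. assert (E := f_equal Cantor.of_nat H).
  rewrite !Cantor.cancel_of_to in E. inversion E; auto.
Qed.

Lemma countable_mono {T : Type} (A B : T -> Prop) :
  (forall x, A x -> B x) -> countable B -> countable A.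
Proof. intros HAB [f Hf]; exists f; intros; apply Hf; auto. Qed.

Lemma lt_zero_false (x : O) : ~ o_lt x o_zero.
Proof.
  intro H. destruct (classic (x = o_zero)) as [E|E].
  - subst; eapply o_lt_irrefl; eauto.
  - apply (o_lt_irrefl O o_zero). eapply o_lt_trans; eauto. apply o_zero_least; auto.
Qed.

Lemma bounded (Sp : O -> Prop) : countable Sp -> exists u, forall s, Sp s -> o_lt s u.
Proof.
  intros [f Hf]. apply NNPP; intro Hn.
  assert (H1 : forall u : O, exists s, Sp s /\ (u = s \/ o_lt u s)).
  { intro u. apply NNPP; intro H2. apply Hn. exists u. intros s Hs.
    destruct (o_lt_total O s u) as [h|[h|h]]; auto; exfalso; apply H2; eauto. }
  assert (Hg : forall y : O, exists g : O -> nat, forall a b, o_lt a y -> o_lt b y -> g a = g b -> a = b)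
    by (intro y; apply o_seg_countable).
  pose (sx := fun u => proj1_sig (constructive_indefinite_description _ (H1 u))).
  pose (gs := fun y => proj1_sig (constructive_indefinite_description _ (Hg y))).
  apply (o_uncountable O).
  exists (fun x => Cantor.to_nat (f (sx x), if excluded_middle_informative (x = sx x) then 0 else S (gs (sx x) x))).
  intros x y _ _ E. apply pair_inj in E. destruct E as [E1 E2].
  assert (Px := proj2_sig (constructive_indefinite_description _ (H1 x))).
  assert (Py := proj2_sig (constructive_indefinite_description _ (H1 y))).
  fold (sx x) in Px. fold (sx y) in Py.
  destruct Px as [Sx Px]; destruct Py as [Sy Py].
  assert (Es : sx x = sx y) by (apply Hf; auto).
  destruct (excluded_middle_informative (x = sx x)) as [a|a];
  destruct (excluded_middle_informative (y = sx y)) as [b|b]; try discriminate.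
  - congruence.
  - injection E2 as E2. rewrite Es in E2.
    assert (G := proj2_sig (constructive_indefinite_description _ (Hg (sx y)))).
    fold (gs (sx y)) in G. apply G; auto.
    + destruct Px as [Px|Px]; [exfalso; apply a; exact Px|]. rewrite <- Es; exact Px.
    + destruct Py as [Py|Py]; [exfalso; apply b; exact Py|]. exact Py.
Qed.

Lemma countable_image (A : O -> Prop) (a : O) (F : O -> O) :
  countable A -> countable (fun y => y = a \/ exists x, A x /\ y = F x).
Proof.
  intros [f Hf].
  exists (fun y => if excluded_middle_informative (y = a) then 0 else
    match excluded_middle_informative (exists x, A x /\ y = F x) with
    | left e => S (f (proj1_sig (constructive_indefinite_description _ e)))
    | right _ => 0 end).
  intros x y Hx Hy E.
  destruct (excluded_middle_informative (x = a)) as [a1|a1];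
  destruct (excluded_middle_informative (y = a)) as [b1|b1]; try congruence.
  - destruct (excluded_middle_informative (exists z, A z /\ y = F z)) as [e|e]; [discriminate|].
    destruct Hy as [|Hy]; tauto.
  - destruct (excluded_middle_informative (exists z, A z /\ x = F z)) as [e|e]; [discriminate|].
    destruct Hx as [|Hx]; tauto.
  - destruct (excluded_middle_informative (exists z, A z /\ x = F z)) as [e1|e1];
    [|destruct Hx as [|Hx]; tauto].
    destruct (excluded_middle_informative (exists z, A z /\ y = F z)) as [e2|e2];
    [|destruct Hy as [|Hy]; tauto].
    destruct (proj2_sig (constructive_indefinite_description _ e1)) as [A1 F1].
    destruct (proj2_sig (constructive_indefinite_description _ e2)) as [A2 F2].
    injection E as E. rewrite F1, F2. f_equal. apply Hf; auto.
Qed.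

Lemma stationary_uncountable (Sp : O -> Prop) : stationary Sp -> ~ countable Sp.
Proof.
  intros HS Hc. destruct (bounded Hc) as [u Hu].
  destruct (HS (fun c => o_lt u c)) as [x [Sx Cx]].
  - split.
    + intros a [b Hb] Hcof. destruct (Hcof b Hb) as [c [Cc [_ Hca]]].
      eapply o_lt_trans; eauto.
    + intro a.
      assert (Hc2 : countable (fun y => y = a \/ exists x, (fun z => z = u) x /\ y = x)).
      { apply countable_image. exists (fun _ => 0). intros; congruence. }
      destruct (bounded Hc2) as [w Hw]. exists w. split.
      * apply Hw. right. eauto.
      * apply Hw. auto.
  - apply (o_lt_irrefl O x). eapply o_lt_trans; eauto.
Qed.

Lemma least_elt (P : O -> Prop) x : P x -> exists m, P m /\ forall y, o_lt y m -> ~ P y.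
Proof.
  revert x. apply (well_founded_ind (o_lt_wf O) (fun x => P x -> exists m, P m /\ forall y, o_lt y m -> ~ P y)).
  intros x IH Px. destruct (classic (exists y, o_lt y x /\ P y)) as [[y [h1 h2]]|N].
  - eapply IH; eauto.
  - exists x. split; auto. intros y h1 h2. apply N; eauto.
Qed.

Lemma fodor (rho : O -> O) : regressive rho -> exists xi, stationary (@Succ O rho xi).
Proof.
  intro Hrho. apply NNPP; intro Hn.
  assert (HC : forall xi : O, exists C, @club O C /\ ~ exists x, @Succ O rho xi x /\ C x).
  { intro xi. apply NNPP; intro H2. apply Hn. exists xi. intros C HC.
    apply NNPP; intro H3. apply H2; eauto. }
  pose (C := fun xi => proj1_sig (constructive_indefinite_description _ (HC xi))).
  assert (HCs : forall xi, @club O (C xi) /\ ~ exists x, @Succ O rho xi x /\ C xi x).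
  { intro xi. exact (proj2_sig (constructive_indefinite_description _ (HC xi))). }
  assert (Hh : forall a xi : O, exists c, C xi c /\ o_lt a c).
  { intros a xi. apply (proj2 (proj1 (HCs xi))). }
  pose (h := fun a xi => proj1_sig (constructive_indefinite_description _ (Hh a xi))).
  assert (Hhs : forall a xi, C xi (h a xi) /\ o_lt a (h a xi)).
  { intros a xi. exact (proj2_sig (constructive_indefinite_description _ (Hh a xi))). }
  assert (Hnx : forall a : O, exists u, forall s, (s = a \/ exists x, (fun z => o_lt z a) x /\ s = h a x) -> o_lt s u).
  { intro a. apply bounded. apply countable_image. apply o_seg_countable. }
  pose (next := fun a => proj1_sig (constructive_indefinite_description _ (Hnx a))).
  assert (Hnext : forall a s, (s = a \/ exists x, o_lt x a /\ s = h a x) -> o_lt s (next a)).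
  { intro a. exact (proj2_sig (constructive_indefinite_description _ (Hnx a))). }
  pose (seq := fun n => Nat.iter n next (@o_zero O)).
  assert (Hinc : forall n, o_lt (seq n) (seq (S n))).
  { intro n. simpl. apply Hnext. auto. }
  assert (Hmono : forall n k, seq n = seq (k + n) \/ o_lt (seq n) (seq (k + n))).
  { intros n k. induction k as [|k IH]; simpl; auto.
    right. destruct IH as [IH|IH].
    - rewrite IH. apply (Hinc (k + n)).
    - eapply o_lt_trans; [exact IH|]. apply (Hinc (k + n)). }
  assert (Hseqc : countable (fun y => exists n, y = seq n)).
  { assert (He : forall y, exists n, (exists m, y = seq m) -> y = seq n).
    { intro y. destruct (classic (exists m, y = seq m)) as [[m Hm]|N].
      - exists m; auto.
      - exists 0; intro; tauto. }
    exists (fun y => proj1_sig (constructive_indefinite_description _ (He y))).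
    intros x y Hx Hy E.
    rewrite (proj2_sig (constructive_indefinite_description _ (He x)) Hx).
    rewrite (proj2_sig (constructive_indefinite_description _ (He y)) Hy).
    rewrite E; reflexivity. }
  destruct (bounded Hseqc) as [u Hu].
  destruct (least_elt (fun a => forall n, seq n = a \/ o_lt (seq n) a) u) as [a [Ha Hmin]].
  { intro n. right. apply Hu. eauto. }
  assert (Hlt : forall n, o_lt (seq n) a).
  { intro n. destruct (Ha (S n)) as [E|E].
    - rewrite <- E. apply Hinc.
    - eapply o_lt_trans; [apply Hinc|exact E]. }
  assert (Hbelow : forall b, o_lt b a -> exists n, o_lt b (seq n)).
  { intros b Hb. apply NNPP; intro N. apply (Hmin b Hb). intro n.
    destruct (o_lt_total O (seq n) b) as [x|[x|x]]; auto.
    exfalso; apply N; eauto. }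
  assert (Hin : forall xi, o_lt xi a -> C xi a).
  { intros xi Hxi. apply (proj1 (proj1 (HCs xi))).
    - exists (seq 0). apply Hlt.
    - intros b Hb. destruct (Hbelow b Hb) as [n Hn1]. destruct (Hbelow xi Hxi) as [m Hm1].
      exists (h (seq (m + n)) xi). destruct (Hhs (seq (m + n)) xi) as [H1 H2].
      assert (Hx : o_lt xi (seq (m + n))).
      { replace (m + n) with (n + m) by lia. destruct (Hmono m n) as [E|E].
        - rewrite <- E; auto.
        - eapply o_lt_trans; eauto. }
      split; [auto|split].
      + destruct (Hmono n m) as [E|E].
        * exact (o_lt_trans _ _ _ _ (eq_ind _ (fun z => o_lt b z) Hn1 _ E) H2).
        * exact (o_lt_trans _ _ _ _ Hn1 (o_lt_trans _ _ _ _ E H2)).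
      + eapply o_lt_trans; [|apply (Hlt (S (m + n)))]. simpl. apply Hnext. right. eauto. }
  assert (Ha0 : a <> o_zero).
  { intro E. apply (lt_zero_false (seq 0)). rewrite <- E. apply Hlt. }
  apply (proj2 (HCs (rho a))). exists a. split.
  - split; auto.
  - apply Hin. apply Hrho; auto.
Qed.

End Aux.


Lemma single_fin (O : omega1) (c0 : coord O) :
  finite_dom (fun c => if excluded_middle_informative (c = c0) then Some true else None).
Proof.
  exists (c0 :: nil). intros c Hc. destruct (excluded_middle_informative (c = c0)).
  - left; auto.
  - exfalso; apply Hc; reflexivity.
Qed.

Lemma flip_nontriv (O : omega1) (Sf : coord O -> Prop) c : Sf c -> acts_nontriv (flip Sf) c.
Proof.
  intro Hc. exists (exist _ _ (single_fin c)). simpl. unfold flip_raw.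
  destruct (excluded_middle_informative (Sf c)); [|tauto].
  destruct (excluded_middle_informative (c = c)); [|tauto]. simpl. discriminate.
Qed.

Lemma relabel_inv_act (O : omega1) (pi : relabeling O) p :
  relabel_act_inv pi (relabel_act pi p) = p.
Proof.
  destruct p as [p Hp]. apply eq_sig_hprop.
  - intros; apply proof_irrelevance.
  - simpl. apply functional_extensionality. intro c. rewrite rl_gf. reflexivity.
Qed.

Theorem proposition2p11 (O : omega1) (rho : O -> O) (Hrho : regressive rho) :
  (exists g, G1cas rho g /\ stationary (row_support g)
             /\ ~ countable (row_support g) /\ ~ countable (total_support g)) /\
  (forall (pi : relabeling O) (H : (P1 O -> P1 O) -> Prop),
     (forall h, H h -> countable (total_support h)) ->
     ~ (forall g, conjG pi (G1cas rho) g -> exists h, H h /\ forall p, h p = g p)).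
Proof.
  destruct (fodor Hrho) as [xi Hxi].
  set (g := tau1cas rho xi 0 (fun n => n = 0)).
  assert (Hg : G1cas rho g).
  { apply G1_tau. left. exists (0 :: nil). intros n Hn; left; auto. }
  assert (Hnt : forall eta, Succ O rho xi eta -> acts_nontriv g (eta, 0, 0)).
  { intros eta He. apply flip_nontriv. simpl. auto. }
  assert (HSu : ~ countable (Succ O rho xi)) by (apply stationary_uncountable; auto).
  assert (Htot : ~ countable (total_support g)).
  { intros [f Hf]. apply HSu. exists (fun eta => f (eta, 0, 0)).
    intros x y Hx Hy E. assert (E2 := Hf _ _ (Hnt x Hx) (Hnt y Hy) E).
    injection E2; auto. }
  split.
  - exists g. split; [auto|]. split; [|split; auto].
    + intros C HC. destruct (Hxi C HC) as [x [Hx Cx]]. exists x. split; auto.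
      exists 0, 0. auto.
    + intro Hc. apply HSu. revert Hc. apply countable_mono.
      intros eta He. exists 0, 0. auto.
  - intros pi H HH Hall.
    destruct (Hall (fun p => relabel_act pi (g (relabel_act_inv pi p)))) as [h [Hh Heq]].
    { exists g. split; auto. }
    destruct (HH h Hh) as [f Hf]. apply Htot.
    assert (Hm : forall c, acts_nontriv g c -> acts_nontriv h (rl_f pi c)).
    { intros c [p Hp]. exists (relabel_act pi p). rewrite Heq.
      rewrite relabel_inv_act. simpl. rewrite !rl_gf. exact Hp. }
    exists (fun c => f (rl_f pi c)). intros x y Hx Hy E.
    assert (E2 := Hf _ _ (Hm x Hx) (Hm y Hy) E).
    rewrite <- (rl_gf pi x), <- (rl_gf pi y), E2. reflexivity.
Qed.
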